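(* Let $G$ be a graph on $n$ vertices and $1\le k\le n-1$. Suppose that $F_k(G)$ is uniquely reconstructible as the $k$-token graph of $G$. Then $\operatorname{Aut}(F_k(G))\simeq \operatorname{Aut}(G)\times\mathbb{Z}_2$ if $k=n/2$ and $n\ge 4$, and $\operatorname{Aut}(F_k(G))\simeq\operatorname{Aut}(G)$ otherwise.
   Context: $F_k(G)$ is the graph on the $k$-subsets of $V(G)$ in which $A,B$ are adjacent iff $A\triangle B$ is an edge of $G$. For $\psi$ an isomorphism between graphs $H\to G$, $\iota(\psi)$ maps a $k$-subset $A$ of $V(H)$ to $\{\psi(v):v\in A\}$. Let $\mathfrak{c}$ send each $k$-subset $A$ of $V(G)$ to $V(G)\setminus A$. A $k$-token reconstruction of a graph $F$ is a pair $(G',\varphi)$ with $\varphi$ an isomorphism $F\to F_k(G')$. Two $k$-token reconstructions $(G,\varphi),(G,\psi)$ of $F$ are equivalent if there is $s\in\operatorname{Aut}(G)$ with $\psi=\iota(s)\circ\varphi$ or $\psi=\mathfrak{c}\circ\iota(s)\circ\varphi$. $F$ is uniquely reconstructible as the $k$-token graph of $G$ if any two $k$-token reconstructions of $F$ of the form $(G,\cdot)$ are equivalent. *)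

(* Defs.v *)
From HB Require Import structures.
From mathcomp Require Import all_boot all_order all_fingroup all_algebra.
Set Implicit Arguments. Unset Strict Implicit. Unset Printing Implicit Defensive.

(* A (finite simple) graph G is given by a vertex finType V and an adjacency
   relation e : rel V which is symmetric and irreflexive. *)

Definition autG (V : finType) (e : rel V) : {set {perm V}} :=
  [set s : {perm V} | [forall x, forall y, e (s x) (s y) == e x y]].

Definition tok (V : finType) (k : nat) := {A : {set V} | #|A| == k}.

Definition symdiff (V : finType) (A B : {set V}) : {set V} := (A :\: B) :|: (B :\: A).

Definition tok_adj (V : finType) (e : rel V) (k : nat) : rel (tok V k) :=
  fun A B => [exists u, exists v, (symdiff (val A) (val B) == [set u; v]) && e u v].

Definition autF (V : finType) (e : rel V) (k : nat) : {set {perm tok V k}} :=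
  [set f : {perm tok V k} | [forall A, forall B, @tok_adj V e k (f A) (f B) == @tok_adj V e k A B]].

(* F_k(G) is uniquely reconstructible as the k-token graph of G: any two
   k-token reconstructions (G, phi), (G, psi) of F := F_k(G) are equivalent,
   i.e. psi = iota(s) o phi or psi = c o iota(s) o phi for some s in Aut(G).
   (phi, psi range over isomorphisms F_k(G) -> F_k(G).) *)
Definition uniquely_reconstructible (V : finType) (e : rel V) (k : nat) : Prop :=
  forall phi psi : {perm tok V k}, phi \in autF e k -> psi \in autF e k ->
    exists2 s : {perm V}, s \in autG e &
      (forall A, val (psi A) = s @: val (phi A)) \/
      (forall A, val (psi A) = ~: (s @: val (phi A))).

(* Main.v *)
Require Import Defs.
From HB Require Import structures.
From mathcomp Require Import all_boot all_order all_fingroup all_algebra.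
From mathcomp Require Import zify.
Set Implicit Arguments. Unset Strict Implicit. Unset Printing Implicit Defensive.

Lemma memperm (T : finType) (s : {perm T}) (A : {set T}) x :
  (x \in s @: A) = ((s^-1)%g x \in A).
Proof. by rewrite -{1}(permKV s x) mem_imset //; apply: perm_inj. Qed.

Lemma autGP V e s : s \in @autG V e -> forall x y, e (s x) (s y) = e x y.
Proof. by rewrite inE => /forallP H x y; move: (H x) => /forallP /(_ y) /eqP. Qed.

Lemma autGI V e (s : {perm V}) : (forall x y, e (s x) (s y) = e x y) -> s \in autG e.
Proof. by move=> H; rewrite inE; apply/forallP=> x; apply/forallP=> y; rewrite H. Qed.

Lemma autFP V e k f : f \in @autF V e k -> forall A B, tok_adj e (f A) (f B) = tok_adj e A B.
Proof. by rewrite inE => /forallP H x y; move: (H x) => /forallP /(_ y) /eqP. Qed.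

Lemma autFI V e k (f : {perm tok V k}) :
  (forall A B, tok_adj e (f A) (f B) = tok_adj e A B) -> f \in autF e k.
Proof. by move=> H; rewrite inE; apply/forallP=> x; apply/forallP=> y; rewrite H. Qed.

Lemma autG_gs V e : group_set (@autG V e).
Proof.
apply/group_setP; split; first by apply: autGI => x y; rewrite !perm1.
move=> s t /autGP Hs /autGP Ht; apply: autGI => x y; by rewrite !permM Ht Hs.
Qed.
Canonical autG_group V e := Group (@autG_gs V e).

Lemma autF1 V e k : 1%g \in @autF V e k.
Proof. by apply: autFI => A B; rewrite !perm1. Qed.

Lemma autFM V e k f g : f \in @autF V e k -> g \in autF e k -> (f * g)%g \in autF e k.
Proof. move=> /autFP Hf /autFP Hg; apply: autFI => x y; by rewrite !permM Hg Hf. Qed.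

Definition tokmap V k (s : {perm V}) (A : tok V k) : tok V k := insubd A (s @: val A).

Lemma val_tokmap V k s (A : tok V k) : val (tokmap s A) = s @: val A.
Proof.
have hA : #|val A| == k := valP A.
by rewrite val_insubd card_imset ?hA //; apply: perm_inj.
Qed.

Lemma tokmap_inj V k s : injective (@tokmap V k s).
Proof.
move=> A B h; apply: val_inj; move: (congr1 val h); rewrite !val_tokmap.
by apply: imset_inj; apply: perm_inj.
Qed.

Definition tiota V k (s : {perm V}) : {perm tok V k} := perm (@tokmap_inj V k s).

Lemma iotaE V k s (A : tok V k) : val (tiota k s A) = s @: val A.
Proof. by rewrite permE val_tokmap. Qed.

Lemma iotaM V k : {morph @tiota V k : s t / (s * t)%g}.
Proof.
move=> s t; apply/permP=> A; apply: val_inj; rewrite permM !iotaE -imset_comp.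
by apply: eq_imset=> x; rewrite /= permM.
Qed.

Definition iota_morph V k := @Morphism _ _ [set: {perm V}] (@tiota V k) (in2W (@iotaM V k)).

Definition compmap V k (A : tok V k) : tok V k := insubd A (~: val A).

Lemma cardC_k (V : finType) k (hk : k.*2 = #|V|) (B : {set V}) : #|B| = k -> #|~: B| == k.
Proof. by move=> hB; have := cardsC B; rewrite hB -hk -addnn => /eqP; rewrite eqn_add2l. Qed.

Lemma val_compmap (V : finType) k (hk : k.*2 = #|V|) (A : tok V k) : val (compmap A) = ~: val A.
Proof.
rewrite val_insubd (@cardC_k V k hk) //; apply/eqP; exact: (valP A).
Qed.

Lemma compmap_inj (V : finType) k (hk : k.*2 = #|V|) : injective (@compmap V k).
Proof.
move=> A B h; apply: val_inj; move: (congr1 val h); rewrite !val_compmap //.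
exact: setC_inj.
Qed.

Definition cperm (V : finType) k (hk : k.*2 = #|V|) : {perm tok V k} := perm (@compmap_inj V k hk).

Lemma cpermE V k hk (A : tok V k) : val (cperm hk A) = ~: val A.
Proof. by rewrite permE val_compmap. Qed.

Lemma imsetCp (T : finType) (s : {perm T}) (A : {set T}) : s @: (~: A) = ~: (s @: A).
Proof. by apply/setP=> x; rewrite memperm !in_setC memperm. Qed.

Lemma cperm_comm V k hk s : commute (@tiota V k s) (cperm hk).
Proof.
apply/permP=> A; apply: val_inj; rewrite !permM iotaE !cpermE iotaE.
by rewrite imsetCp.
Qed.

Lemma cperm2 V k hk : (@cperm V k hk ^+ 2 = 1)%g.
Proof.
apply/permP=> A; apply: val_inj; rewrite expgS expg1 permM perm1 !cpermE.
exact: setCK.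
Qed.

Definition adjS (V : finType) (e : rel V) (D : {set V}) :=
  [exists u, exists v, (D == [set u; v]) && e u v].

Lemma adjS_perm V e s (D : {set V}) : s \in autG e -> adjS e (s @: D) = adjS e D.
Proof.
move=> hs; apply/existsP/existsP.
- case=> u /existsP [v /andP [/eqP hD huv]]; exists ((s^-1)%g u); apply/existsP.
  exists ((s^-1)%g v); rewrite -(autGP hs) !permKV huv andbT; apply/eqP/setP => x.
  have -> : (x \in D) = (s x \in s @: D) by rewrite mem_imset //; apply: perm_inj.
  by rewrite hD !inE !(can2_eq (permK s) (permKV s)).
- case=> u /existsP [v /andP [/eqP hD huv]]; exists (s u); apply/existsP; exists (s v).
  by rewrite (autGP hs) huv andbT hD imsetU1 imset_set1.
Qed.

Lemma symdiff_perm (T : finType) (s : {perm T}) (A B : {set T}) :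
  symdiff (s @: A) (s @: B) = s @: symdiff A B.
Proof. by apply/setP=> x; rewrite /symdiff memperm !in_setU !in_setD !memperm. Qed.

Lemma symdiffC (T : finType) (A B : {set T}) : symdiff (~: A) (~: B) = symdiff A B.
Proof.
apply/setP=> x; rewrite /symdiff !in_setU !in_setD !in_setC.
by case: (x \in A); case: (x \in B).
Qed.

Lemma iota_autF V e k s : s \in autG e -> @tiota V k s \in autF e k.
Proof.
move=> hs; apply: autFI => A B; rewrite /tok_adj !iotaE symdiff_perm.
exact: (adjS_perm _ hs).
Qed.

Lemma cperm_autF V e k hk : @cperm V k hk \in autF e k.
Proof. by apply: autFI => A B; rewrite /tok_adj !cpermE symdiffC. Qed.

Lemma ext_set (T : finType) (B C : {set T}) n : B \subset C -> #|B| <= n -> n <= #|C| ->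
  exists A : {set T}, [/\ B \subset A, A \subset C & #|A| = n].
Proof.
move=> sBC; elim: n => [|n IH] hB hC.
  by exists B; split => //; move: hB; rewrite leqn0 => /eqP.
case: (ltngtP #|B| n.+1) => [hlt|hgt|heq].
- have [A [sBA sAC cA]] := IH hlt (ltnW hC).
  have : A \proper C by rewrite properEcard sAC cA.
  case/properP=> _ [z zC zA]; exists (z |: A); split.
  + exact: (subset_trans sBA (subsetUr _ _)).
  + by rewrite subUset sub1set zC sAC.
  + by rewrite cardsU1 zA cA.
- by rewrite ltnNge hB in hgt.
- by exists B.
Qed.

Lemma iota_inj (V : finType) k (hk1 : 1 <= k) (hk2 : k <= #|V| - 1) (s t : {perm V}) :
  (forall A : tok V k, s @: val A = t @: val A) -> s = t.
Proof.
move=> H; apply/permP => x; apply/eqP; apply/negPn/negP => hne.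
set y := (s^-1)%g (t x).
have hyx : y != x by apply: contra hne => /eqP hy; rewrite -{1}hy /y permKV.
have h1 : [set x] \subset ~: [set y] by rewrite sub1set !inE eq_sym.
have h2 : #|[set x]| <= k by rewrite cards1.
have h3 : k <= #|~: [set y]| by move: hk2; rewrite -(cardsC [set y]) cards1 add1n subSS subn0.
have [A [sxA sAy cA]] := ext_set h1 h2 h3.
have hA : #|A| == k by rewrite cA.
have := H (Sub A hA) => /= hst.
have : t x \in t @: A by apply: imset_f; rewrite -sub1set.
rewrite -hst memperm -/y => yA.
by move/subsetP: sAy => /(_ _ yA); rewrite !inE eqxx.
Qed.

Lemma iota_noncomp (V : finType) k (hk1 : 2 <= k) (hk2 : k <= #|V|) (s t : {perm V}) :
  ~ (forall A : tok V k, s @: val A = ~: (t @: val A)).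
Proof.
move=> H.
have h0 : 0 < #|V| by apply: leq_trans hk2; apply: leq_trans hk1.
case/card_gt0P: h0 => x _.
set y := (t^-1)%g (s x).
have h2 : #|[set x; y]| <= k by rewrite cards2; apply: leq_trans hk1; case: (x != y).
have h3 : k <= #|[set: V]| by rewrite cardsT.
have [A [sxA _ cA]] := ext_set (subsetT [set x; y]) h2 h3.
have hA : #|A| == k by rewrite cA.
have := H (Sub A hA) => /= hst.
have : s x \in s @: A by apply: imset_f; move/subsetP: sxA; apply; rewrite !inE eqxx.
rewrite hst in_setC memperm -/y.
by move/subsetP: sxA => /(_ y); rewrite !inE eqxx orbT => ->.
Qed.

Lemma cpermX_autF (V : finType) e k (hk : k.*2 = #|V|) n : (@cperm V k hk ^+ n)%g \in autF e k.
Proof.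
elim: n => [|n IH]; first by rewrite expg0 autF1.
by rewrite expgS autFM // cperm_autF.
Qed.

Theorem proposition5 (V : finType) (e : rel V)
  (e_sym : symmetric e) (e_irr : irreflexive e)
  (k : nat) (hk1 : 1 <= k) (hk2 : k <= #|V| - 1)
  (Huniq : uniquely_reconstructible e k) :
  if (k.*2 == #|V|) && (4 <= #|V|)
  then autF e k \isog setX (autG e) [set: 'Z_2]
  else autF e k \isog autG e.
Proof.
have F1 := @autF1 V e k.
have hk0 : k <= #|V| by lia.
case: ifP => [/andP [/eqP hk hn4] | hcase].
- have hk2' : 2 <= k by rewrite -leq_double hk.
  pose c := cperm hk.
  pose f (p : {perm V} * 'Z_2) := (tiota k p.1 * c ^+ p.2)%g.
  have fM : {morph f : x y / (x * y)%g}.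
    move=> [s a] [t b]; rewrite /f /=.
    have c2 : (c ^+ (Zp_trunc 2).+2 = 1)%g := cperm2 hk.
    rewrite (expg_mod _ c2) expgD iotaM.
    rewrite -!mulgA; congr (_ * _)%g; rewrite !mulgA; congr (_ * _)%g.
    exact: (commuteX a (cperm_comm hk t)).
  pose fm := @Morphism _ _ setT f (in2W fM).
  have injf : ('injm fm)%g.
    apply/injmP => [[s a] [t b]] _ _ /= heq.
    have hv A := congr1 (fun g : {perm tok V k} => val (g A)) heq.
    clear heq; move: a b hv => [[|[|m]] Ha] // [[|[|m']] Hb] // hv;
      rewrite /f ?expg0 ?expg1 ?mulg1 in hv.
    + have hst : s = t.
        by apply: (iota_inj hk1 hk2) => A; move: (hv A); rewrite !iotaE.
      by rewrite hst (bool_irrelevance Ha Hb).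
    + exfalso; apply: (iota_noncomp hk2' hk0 (s:=s) (t:=t)) => A.
      by move: (hv A); rewrite !permM !iotaE cpermE iotaE.
    + exfalso; apply: (iota_noncomp hk2' hk0 (s:=t) (t:=s)) => A.
      by move: (hv A); rewrite !permM !iotaE cpermE iotaE /= => <-.
    + have hst : s = t.
        apply: (iota_inj hk1 hk2) => A; apply: setC_inj.
        by move: (hv A); rewrite !permM !cpermE !iotaE.
      by rewrite hst (bool_irrelevance Ha Hb).
  have himg : (fm @* setX (autG e) [set: 'Z_2])%g = autF e k.
    rewrite morphimEsub ?subsetT //; apply/setP => g; apply/imsetP/idP.
    + case=> [[s a]]; rewrite inE /= => /andP [hs _] ->.
      by apply: autFM; [apply: iota_autF | apply: cpermX_autF].
    + move=> hg; have [s hs [H|H]] := Huniq 1%g g F1 hg.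
      * exists (s, ord0); first by rewrite inE hs inE.
        apply/permP => A; apply: val_inj.
        by rewrite /= /f /= expg0 mulg1 H iotaE perm1.
      * exists (s, (@Ordinal 2 1 isT : 'Z_2)); first by rewrite inE hs inE.
        apply/permP => A; apply: val_inj.
        by rewrite /= /f /= expg1 permM H cpermE iotaE perm1.
  have hiso := @sub_isog _ _ [set: {perm V} * 'Z_2]%G fm _ (subsetT (setX (autG e) [set: 'Z_2])) injf.
  by rewrite -himg isog_sym.
- pose fm := iota_morph V k.
  have injf : ('injm fm)%g.
    apply/injmP => s t _ _ heq; apply: (iota_inj hk1 hk2) => A.
    by have := congr1 (fun g : {perm tok V k} => val (g A)) heq; rewrite /= !iotaE.
  have himg : (fm @* autG e)%g = autF e k.
    rewrite morphimEsub ?subsetT //; apply/setP => g; apply/imsetP/idP.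
    + by case=> s hs ->; apply: iota_autF.
    + move=> hg; have [s hs [H|H]] := Huniq 1%g g F1 hg.
      * exists s => //; apply/permP => A; apply: val_inj.
        by rewrite H iotaE perm1.
      * have hkT : k <= #|[set: V]| by rewrite cardsT.
        have h0 : #|@set0 V| <= k by rewrite cards0.
        have [A0 [_ _ cA0]] := ext_set (sub0set [set: V]) h0 hkT.
        have hA0 : #|A0| == k by rewrite cA0.
        have hc : #|~: (s @: A0)| = k.
          by have := H (Sub A0 hA0); rewrite perm1 SubK => <-; apply/eqP; exact: (valP (g (Sub A0 hA0))).
        have hk : k.*2 = #|V|.
          by rewrite -addnn -{2}hc -{1}cA0 -(card_imset _ (@perm_inj _ s)) cardsC.
        have hn4 : ~~ (4 <= #|V|) by apply/negP => h4; move: hcase; rewrite hk eqxx h4.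
        have hn2 : #|V| = 2 by lia.
        have hk1' : k = 1 by lia.
        have : 1 < #|V| by rewrite hn2.
        case/card_gt1P => x [y [_ _ hne]].
        have hxy w : (w == x) || (w == y).
          have : [set x; y] == [set: V] by rewrite eqEcard subsetT cardsT cards2 hne hn2.
          by move/eqP/setP/(_ w); rewrite !inE.
        have hne' : y != x by rewrite eq_sym.
        pose t := tperm x y.
        have ht : t \in autG e.
          apply: autGI => a b; rewrite /t.
          case/orP: (hxy a) => /eqP->; case/orP: (hxy b) => /eqP->;
            rewrite ?tpermL ?tpermR ?e_irr //; apply: e_sym.
        exists (s * t)%g; first by rewrite groupM.
        apply/permP => A; apply: val_inj; rewrite /= H iotaE perm1.
        have /cards1P [a ->] : #|val A| == 1 by rewrite -hk1'; exact: (valP A).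
        rewrite !imset_set1 permM; apply/setP => z; rewrite !inE /t.
        case/orP: (hxy z) => /eqP->; case/orP: (hxy (s a)) => /eqP->;
          by rewrite ?tpermL ?tpermR ?eqxx ?(negbTE hne) ?(negbTE hne').
  have hiso := @sub_isog _ _ [set: {perm V}]%G fm _ (subsetT (autG e)) injf.
  by rewrite -himg isog_sym.
Qed.
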